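(* For $n\ge 1$ let $G_n$ be the number of domino tilings of $C_4\times P_n$. Then for all $n\ge 1$ $$G_n=\frac16\Big[(2+\sqrt3)^{n+1}+(2-\sqrt3)^{n+1}\Big]+\frac13(-1)^n,$$ and for all $n\ge1$ we have $G_{2n}=A_n^2$ and $G_{2n-1}=2B_n^2$, where $$A_n=\frac16\Big[(3+\sqrt3)(2+\sqrt3)^n+(3-\sqrt3)(2-\sqrt3)^n\Big],\qquad B_n=\frac{1}{2\sqrt3}\Big[(2+\sqrt3)^n-(2-\sqrt3)^n\Big].$$
   Context: For graphs $H,K$, $H\times K$ denotes the Cartesian product. $P_n$ is the path on $n$ vertices and $C_4$ is the cycle on $4$ vertices. A domino tiling of a finite graph means a perfect matching of it, so the number of domino tilings of a graph is its number of perfect matchings. Equivalently, $A_n$ and $B_n$ are the integer sequences with $A_1=3$, $A_2=11$, $A_n=4A_{n-1}-A_{n-2}$, and $B_1=1$, $B_2=4$, $B_n=4B_{n-1}-B_{n-2}$ for $n\ge3$. *)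

(* Defs.v *)
From HB Require Import structures.
From mathcomp Require Import all_boot all_order all_algebra.
Set Implicit Arguments. Unset Strict Implicit. Unset Printing Implicit Defensive.
Import Order.TTheory GRing.Theory Num.Theory.

Definition CPvert (n : nat) : finType := ('I_4 * 'I_n)%type.

Definition C4adj (i i' : 'I_4) : bool :=
  ((i.+1 %% 4) == i') || ((i'.+1 %% 4) == i).

Definition Padj (n : nat) (j j' : 'I_n) : bool := (j.+1 == j') || (j'.+1 == j).

Definition CPadj (n : nat) (x y : CPvert n) : bool :=
  ((x.2 == y.2) && C4adj x.1 y.1) || ((x.1 == y.1) && Padj x.2 y.2).

Definition is_edge (n : nat) (e : {set CPvert n}) : bool :=
  [exists x, exists y, CPadj x y && (e == [set x; y])].

Definition perfect_matching (n : nat) (M : {set {set CPvert n}}) : bool :=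
  [forall e in M, is_edge e] &&
  [forall v : CPvert n, #|[set e in M | v \in e]| == 1%N].

Definition G (n : nat) : nat := #|[set M : {set {set CPvert n}} | perfect_matching M]|.

Local Open Scope ring_scope.

Definition Acl (R : rcfType) (n : nat) : R :=
  (1 / 6%:R) * ((3%:R + Num.sqrt 3%:R) * (2%:R + Num.sqrt 3%:R) ^+ n
               + (3%:R - Num.sqrt 3%:R) * (2%:R - Num.sqrt 3%:R) ^+ n).

Definition Bcl (R : rcfType) (n : nat) : R :=
  (1 / (2%:R * Num.sqrt 3%:R)) * ((2%:R + Num.sqrt 3%:R) ^+ n - (2%:R - Num.sqrt 3%:R) ^+ n).

(* Main.v *)
Require Import Defs.
From HB Require Import structures.
From mathcomp Require Import all_boot all_order all_algebra.
From mathcomp Require Import zify ring lra.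
Set Implicit Arguments. Unset Strict Implicit. Unset Printing Implicit Defensive.

Definition bitn (S i : nat) : bool := odd (S %/ 2 ^ i).
Definition mk4 (b : nat -> bool) : nat := b 0 + 2 * b 1 + 4 * b 2 + 8 * b 3.
Lemma bit_mk4 b i : i < 4 -> bitn (mk4 b) i = b i.
Proof.
rewrite /mk4 /bitn; case: i => [|[|[|[|i]]]] hi //;
by case: (b 0); case: (b 1); case: (b 2); case: (b 3).
Qed.
Lemma mk4_lt b : mk4 b < 16.
Proof. by rewrite /mk4; case: (b 0); case: (b 1); case: (b 2); case: (b 3). Qed.
Lemma mk4_bit (W : 'I_16) : mk4 (bitn W) = W.
Proof.
case: W => m hm /=.
have : all (fun m => mk4 (bitn m) == m) (iota 0 16) by vm_compute.
by move/allP/(_ m); rewrite mem_iota /= => /(_ hm)/eqP.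
Qed.
Lemma bit0 i : bitn 0 i = false.
Proof. by rewrite /bitn div0n. Qed.

Definition s4 (i : 'I_4) : 'I_4 := Ordinal (ltn_pmod i.+1 (isT : 0 < 4)).
Definition p4o (i : 'I_4) : 'I_4 := Ordinal (ltn_pmod (i + 3) (isT : 0 < 4)).
Lemma s4p4 i : s4 (p4o i) = i.
Proof. apply: val_inj; case: i => [[|[|[|[|]]]] //]. Qed.
Lemma s4_neq i : s4 i != i.
Proof. case: i => [[|[|[|[|]]]] //]. Qed.
Lemma s4_eq i i0 : (s4 i == i0) = (i == p4o i0).
Proof.
apply/eqP/eqP => [<-|->]; last exact: s4p4.
apply: val_inj; case: i => [[|[|[|[|]]]] //].
Qed.
Lemma p4o_neq i : p4o i != i.
Proof. case: i => [[|[|[|[|]]]] //]. Qed.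


Lemma s4_inj : injective s4.
Proof.
move=> [a ha] [b hb] /(congr1 val) /= h; apply: val_inj => /=; move: ha hb h.
by case: a => [|[|[|[|a]]]] //; case: b => [|[|[|[|b]]]].
Qed.
Lemma s4s4_neq i : s4 (s4 i) != i.
Proof. case: i => [[|[|[|[|]]]] //]. Qed.

Lemma card_bij (T1 T2 : finType) (A : {set T1}) (B : {set T2}) (f : T1 -> T2) (g : T2 -> T1) :
  {in A, forall x, f x \in B} -> {in B, forall y, g y \in A} ->
  {in A, cancel f g} -> {in B, cancel g f} -> #|A| = #|B|.
Proof.
move=> fAB gBA fK gK; apply/eqP; rewrite eqn_leq; apply/andP; split.
- rewrite -(card_in_imset (f := f)); last by move=> x y hx hy e; rewrite -(fK x hx) -(fK y hy) e.
  by apply: subset_leq_card; apply/subsetP => y /imsetP [x hx ->]; apply: fAB.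
- rewrite -(card_in_imset (f := g)); last by move=> x y hx hy e; rewrite -(gK x hx) -(gK y hy) e.
  by apply: subset_leq_card; apply/subsetP => y /imsetP [x hx ->]; apply: gBA.
Qed.

Lemma disjP' (T : finType) (A B : {set T}) : (forall x, x \in A -> x \in B -> False) -> [disjoint A & B].
Proof. move=> h; rewrite disjoint_subset; apply/subsetP => x hx; rewrite inE; apply/negP => hb; exact: h x hx hb. Qed.

Lemma card_sumb (T : finType) (P : pred T) : #|[set x | P x]| = \sum_x P x.
Proof.
rewrite -sum1_card big_mkcond /=; apply: eq_bigr => x _; rewrite inE; by case: (P x).
Qed.

Lemma card2b (b : 'I_4 -> bool) (a c : 'I_4) : a != c ->
  #|[set i | b i && ((i == a) || (i == c))]| = b a + b c.
Proof.
move=> ac.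
have -> : [set i | b i && ((i == a) || (i == c))] =
   (if b a then [set a] else set0) :|: (if b c then [set c] else set0).
  apply/setP => i; case Ea: (b a); case Ec: (b c); rewrite !inE;
  have [->|ia] := eqVneq i a; rewrite ?Ea ?Ec ?eqxx ?(negbTE ac) //=;
  have [->|ic] := eqVneq i c; rewrite ?Ea ?Ec ?eqxx ?(negbTE ia) ?andbF //=.
rewrite cardsU.
case: (b a); case: (b c); rewrite ?set0I ?setI0 ?cards1 ?cards0 //.
suff -> : [set a] :&: [set c] = set0 by rewrite cards0.
by apply/setP => i; rewrite !inE; apply/negbTE; apply/andP => [[/eqP -> /eqP e]]; rewrite e eqxx in ac.
Qed.

Definition p4 (i : nat) : nat := (i + 3) %% 4.
Definition lokn (S W T : nat) : bool :=
  all (fun i => if bitn S i then ~~ bitn W i && ~~ bitn W (p4 i) && ~~ bitn T i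
                else (bitn W i + bitn W (p4 i) + bitn T i == 1)) (iota 0 4).
Lemma lokP S W T : reflect (forall i : 'I_4, if bitn S i then ~~ bitn W i && ~~ bitn W (p4o i) && ~~ bitn T i
                else (bitn W i + bitn W (p4o i) + bitn T i == 1)) (lokn S W T).
Proof.
apply: (iffP allP) => h.
- by move=> i; apply: h; rewrite mem_iota /=.
- by move=> i; rewrite mem_iota /= => hi; exact: (h (Ordinal hi)).
Qed.
Lemma bool3 (a b c s : bool) : a + b + c = ~~ s -> if s then ~~a && ~~b && ~~c else (a + b + c == 1).
Proof. by case: a; case: b; case: c; case: s. Qed.
Lemma bool3' (a b c s : bool) : (if s then ~~a && ~~b && ~~c else (a + b + c == 1)) -> a + b + c = ~~ s.
Proof. by case: a; case: b; case: c; case: s => //= /eqP. Qed.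
Lemma eq_mk4 f g : (forall i, i < 4 -> f i = g i) -> mk4 f = mk4 g.
Proof. by move=> h; rewrite /mk4 !h. Qed.

Section Comb.
Variable n : nat.
Local Notation V := (CPvert n).

Definition colge k (e : {set V}) := [forall x in e, k <= x.2].
Lemma colge2 k (x y : V) : colge k [set x; y] = (k <= x.2) && (k <= y.2).
Proof.
apply/forall_inP/andP => [H|[Hx Hy] z]; first by split; apply: H; rewrite !inE eqxx ?orbT.
by rewrite !inE => /orP [] /eqP ->.
Qed.

Definition good k (S : nat) (M : {set {set V}}) :=
 [forall e in M, is_edge e && colge k e] &&
 [forall v : V, (k <= v.2) ==> (#|[set e in M | v \in e]| == ~~((v.2 == k :> nat) && bitn S v.1))].
Definition F k S := #|[set M | good k S M]|.

Section Col.
Variable j : 'I_n.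
Local Notation k := (nat_of_ord j).
Definition jn : 'I_n := insubd j j.+1.
Lemma jn_val : k.+1 < n -> val jn = k.+1.
Proof. by move=> h; rewrite val_insubd h. Qed.
Lemma jn_val' : ~~(k.+1 < n) -> jn = j.
Proof. by move=> h; apply: val_inj; rewrite val_insubd (negbTE h). Qed.
Definition hedge (i : 'I_4) : {set V} := [set ((i, j) : V); ((s4 i, j) : V)].
Definition vedge (i : 'I_4) : {set V} := [set ((i, j) : V); ((i, jn) : V)].

Lemma edge_cases e : is_edge e -> colge k e ->
  colge k.+1 e \/ (exists i, e = hedge i) \/ (k.+1 < n /\ exists i, e = vedge i).
Proof.
case/existsP => x /existsP [y /andP [adj /eqP ->]].
rewrite !colge2 => /andP [hx hy].
case: (ltnP k x.2) => hx'; case: (ltnP k y.2) => hy'; first by left.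
-
  have ey : y.2 = j by apply: val_inj; apply/eqP; rewrite eqn_leq hy hy'.
  move: adj; rewrite /CPadj /C4adj /Padj.
  case/orP => /andP [/eqP e1 h].
  + by move: hx'; rewrite e1 ey ltnn.
  + case/orP: h => /eqP h.
    * by move: hx'; rewrite -ltnS h ey ltnNge leqnSn.
    * have hk : k.+1 < n by rewrite -ey h ltn_ord.
      right; right; split=> //.
      exists y.1; apply/setP => z; rewrite !inE.
      have -> : x = (y.1, jn) :> V.
        case: x e1 h {hx hx'} => a b /= -> h; congr pair; apply: val_inj; rewrite jn_val //= -h ey //.
      by clear h e1; case: y ey {hy hy'} => ya yb /= ->; rewrite orbC.
- have ex : x.2 = j by apply: val_inj; apply/eqP; rewrite eqn_leq hx hx'.
  move: adj; rewrite /CPadj /C4adj /Padj.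
  case/orP => /andP [/eqP e1 h].
  + by move: hy'; rewrite -e1 ex ltnn.
  + case/orP: h => /eqP h.
    * have hk : k.+1 < n by rewrite -ex h ltn_ord.
      right; right; split=> //.
      exists x.1; apply/setP => z; rewrite !inE.
      have -> : y = (x.1, jn) :> V.
        case: y e1 h {hy hy'} => a b /= <- h; congr pair; apply: val_inj; rewrite jn_val //= -h ex //.
      by clear h e1; case: x ex {hx hx'} => a b /= ->.
    * by move: hy'; rewrite -ltnS h ex ltnNge leqnSn.
- have ex : x.2 = j by apply: val_inj; apply/eqP; rewrite eqn_leq hx hx'.
  have ey : y.2 = j by apply: val_inj; apply/eqP; rewrite eqn_leq hy hy'.
  move: adj; rewrite /CPadj /C4adj /Padj ex ey eqxx /=.
  case/orP => [h|/andP [_ h]]; last by move: h => /orP [] /eqP; lia.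
  right; left.
  case/orP: h => /eqP h.
  + exists x.1; apply/setP => z; rewrite !inE.
    have -> : y = (s4 x.1, j) :> V by case: y ey h {hy hy'} => a b /= -> h; congr pair; apply: val_inj.
    by clear h; case: x ex {hx hx'} => a b /= ->.
  + exists y.1; apply/setP => z; rewrite !inE orbC.
    have -> : x = (s4 y.1, j) :> V by case: x ex h {hx hx'} => a b /= -> h; congr pair; apply: val_inj.
    by clear h; case: y ey {hy hy'} => a b /= ->.
Qed.

Lemma hedgeE (v : V) i : (v \in hedge i) = (v.2 == j) && ((v.1 == i) || (v.1 == s4 i)).
Proof. rewrite !inE; case: v => a b /=; rewrite !xpair_eqE; by case: (b == j); rewrite ?andbT ?andbF. Qed.
Lemma vedgeE (v : V) i : (v \in vedge i) = (v.1 == i) && ((v.2 == j) || (v.2 == jn)).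
Proof. rewrite !inE; case: v => a b /=; rewrite !xpair_eqE; by case: (a == i); rewrite ?andbT ?andbF. Qed.

Lemma hedge_inj : injective hedge.
Proof.
move=> i i' h.
have h1 : ((i, j) : V) \in hedge i' by rewrite -h !inE eqxx.
have h2 : ((s4 i, j) : V) \in hedge i' by rewrite -h !inE eqxx orbT.
rewrite !hedgeE /= eqxx /= in h1 h2.
case/orP: h1 => /eqP // e1; subst i.
case/orP: h2 => /eqP e2; first by move: (s4s4_neq i'); rewrite e2 eqxx.
by move: (s4_inj e2) => e3; move: (s4_neq i'); rewrite e3 eqxx.
Qed.
Lemma vedge_inj : injective vedge.
Proof.
move=> i i' h.
have h1 : ((i, j) : V) \in vedge i' by rewrite -h !inE eqxx.
by rewrite vedgeE /= eqxx /= andbT in h1; apply/eqP.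
Qed.
Lemma hedge_vedge i i' : hedge i != vedge i'.
Proof.
apply/eqP => h.
have h1 : ((i, j) : V) \in vedge i' by rewrite -h !inE eqxx.
have h2 : ((s4 i, j) : V) \in vedge i' by rewrite -h !inE eqxx orbT.
rewrite !vedgeE /= eqxx /= !andbT in h1 h2.
by move/eqP: h1 h2 => <- h2; move: (s4_neq i); rewrite h2.
Qed.
Lemma hedge_col i : ~~ colge k.+1 (hedge i).
Proof. by rewrite colge2 /= ltnn. Qed.
Lemma vedge_col i : ~~ colge k.+1 (vedge i).
Proof. by rewrite colge2 /= ltnn. Qed.

Definition Hset (W : nat) := [set hedge i | i in [pred i : 'I_4 | bitn W i]].
Definition Vset (T : nat) := [set vedge i | i in [pred i : 'I_4 | bitn T i]].
Definition cnt (M : {set {set V}}) (v : V) := #|[set e in M | v \in e]|.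

Lemma cntU (A B : {set {set V}}) (v : V) : [disjoint A & B] -> cnt (A :|: B) v = cnt A v + cnt B v.
Proof.
move=> dAB; rewrite /cnt.
have -> : [set e in A :|: B | v \in e] = [set e in A | v \in e] :|: [set e in B | v \in e].
  by apply/setP => e; rewrite !inE andb_orl.
rewrite cardsU.
suff -> : [set e in A | v \in e] :&: [set e in B | v \in e] = set0 by rewrite cards0 subn0.
apply/setP => e; rewrite !inE; apply/negbTE; apply/andP => [[/andP [ha _] /andP [hb _]]].
by rewrite (disjointFr dAB ha) in hb.
Qed.

Lemma cnt_Hset W v : cnt (Hset W) v = (v.2 == j) * (bitn W v.1 + bitn W (p4o v.1)).
Proof.
rewrite /cnt.
have -> : [set e in Hset W | v \in e] = hedge @: [set i : 'I_4 | bitn W i && (v \in hedge i)].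
  apply/setP => e; apply/idP/idP.
  - rewrite inE => /andP [/imsetP [i hi ->] hv]; apply: imset_f; rewrite inE hv andbT; exact: hi.
  - case/imsetP => i; rewrite inE => /andP [hi hv] ->; rewrite inE hv andbT.
    by apply: imset_f.
rewrite card_imset; last exact: hedge_inj.
case: (eqVneq v.2 j) => hj /=.
- rewrite mul1n; transitivity #|[set i : 'I_4 | bitn W i && ((i == v.1) || (i == p4o v.1))]|;
    last by apply: (card2b (fun i : 'I_4 => bitn W i)); rewrite eq_sym p4o_neq.
  apply: eq_card => i; rewrite inE [RHS]inE hedgeE hj eqxx /= [v.1 == s4 i]eq_sym s4_eq.
  by rewrite [v.1 == i]eq_sym.
- rewrite mul0n; apply/eqP; rewrite cards_eq0; apply/eqP/setP => i.
  by rewrite inE [RHS]inE hedgeE (negbTE hj) andbF.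
Qed.

Lemma cnt_Vset T v : cnt (Vset T) v = ((v.2 == j) || (v.2 == jn)) * bitn T v.1.
Proof.
rewrite /cnt.
have -> : [set e in Vset T | v \in e] = vedge @: [set i : 'I_4 | bitn T i && (v \in vedge i)].
  apply/setP => e; apply/idP/idP.
  - rewrite inE => /andP [/imsetP [i hi ->] hv]; apply: imset_f; rewrite inE hv andbT; exact: hi.
  - case/imsetP => i; rewrite inE => /andP [hi hv] ->; rewrite inE hv andbT.
    by apply: imset_f.
rewrite card_imset; last exact: vedge_inj.
case hj: ((v.2 == j) || (v.2 == jn)) => /=.
- rewrite mul1n.
  have -> : [set i : 'I_4 | bitn T i && (v \in vedge i)] = if bitn T v.1 then [set v.1] else set0.
    apply/setP => i; rewrite inE vedgeE hj andbT.
    case: (eqVneq v.1 i) => [<-|ne]; first by case: (bitn T v.1); rewrite ?inE ?eqxx.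
    by case: (bitn T i); case: (bitn T v.1); rewrite ?inE ?andbF // eq_sym (negbTE ne).
  by case: (bitn T v.1); rewrite ?cards1 ?cards0.
- rewrite mul0n; apply/eqP; rewrite cards_eq0; apply/eqP/setP => i.
  by rewrite inE [RHS]inE vedgeE hj !andbF.
Qed.

Lemma cnt_col (M : {set {set V}}) v : [forall e in M, colge k.+1 e] -> v.2 = j -> cnt M v = 0.
Proof.
move=> /forall_inP hM hv; apply/eqP; rewrite cards_eq0; apply/eqP/setP => e; rewrite !inE.
apply/negbTE; apply/andP => [[he hve]].
by move: (hM e he) => /forall_inP /(_ v hve); rewrite hv ltnn.
Qed.


Lemma colge_S e : colge k.+1 e -> colge k e.
Proof. by move/forall_inP => h; apply/forall_inP => x /h /ltnW. Qed.

Lemma jn_eq (v2 : 'I_n) : k < v2 -> (v2 == jn) = (v2 == k.+1 :> nat).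
Proof.
move=> h; case: (ltnP k.+1 n) => hk.
- by rewrite -(inj_eq val_inj) /= jn_val.
- rewrite jn_val' -?ltnNge //.
  have -> : (v2 == j) = false by apply/negbTE; apply/eqP => e; rewrite e ltnn in h.
  by apply/esym/negbTE; apply/eqP => e; move: (ltn_ord v2); rewrite e ltnNge hk.
Qed.

Local Notation Tr := ('I_16 * 'I_16 * {set {set V}})%type.
Definition gl (x : Tr) : {set {set V}} := x.2 :|: Hset x.1.1 :|: Vset x.1.2.
Definition Wof (M : {set {set V}}) : 'I_16 := inord (mk4 (fun i => hedge (inord i) \in M)).
Definition Tof (M : {set {set V}}) : 'I_16 := inord (mk4 (fun i => vedge (inord i) \in M)).
Definition rest (M : {set {set V}}) := [set e in M | colge k.+1 e].
Definition fl (M : {set {set V}}) : Tr := (Wof M, Tof M, rest M).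
Definition Bset S := [set x : Tr | lokn S x.1.1 x.1.2 && ((x.1.2 == 0 :> nat) || (k.+1 < n)) && good k.+1 x.1.2 x.2].
Definition Aset S := [set M | good k S M].

Lemma bit_Wof M (i : 'I_4) : bitn (Wof M) i = (hedge i \in M).
Proof. by rewrite /Wof inordK ?mk4_lt // bit_mk4 ?inord_val. Qed.
Lemma bit_Tof M (i : 'I_4) : bitn (Tof M) i = (vedge i \in M).
Proof. by rewrite /Tof inordK ?mk4_lt // bit_mk4 ?inord_val. Qed.

Lemma cnt_gl (x : Tr) v : [forall e in x.2, colge k.+1 e] ->
  cnt (gl x) v = cnt x.2 v + (v.2 == j) * (bitn x.1.1 v.1 + bitn x.1.1 (p4o v.1))
                 + ((v.2 == j) || (v.2 == jn)) * bitn x.1.2 v.1.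
Proof.
move=> /forall_inP hM; rewrite /gl cntU ?cntU ?cnt_Hset ?cnt_Vset //.
all: apply: disjP' => e h1 h2.
- move: h2 => /imsetP [i _ e']; move: h1 => he.
  by move: (hM e he); rewrite e' (negbTE (hedge_col i)).
- move: h1 h2; rewrite in_setU => /orP [he|/imsetP [i _ ->]] /imsetP [i' _ e'].
  + by move: (hM e he); rewrite e' (negbTE (vedge_col i')).
  + by move: (hedge_vedge i i'); rewrite e' eqxx.
Qed.

Lemma good_unpack k' S M : good k' S M ->
  (forall e, e \in M -> is_edge e && colge k' e) /\
  (forall v : V, k' <= v.2 -> cnt M v = ~~((v.2 == k' :> nat) && bitn S v.1)).
Proof.
case/andP => /forall_inP hE /forallP hV; split => // v hv.
by move: (hV v); rewrite hv /= => /eqP.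
Qed.

Lemma gl_fl S M : M \in Aset S -> gl (fl M) = M.
Proof.
rewrite inE => /good_unpack [hE _].
apply/setP => e; rewrite /gl /fl /= !inE; apply/idP/idP.
- case/orP => [/orP [/andP [] //|/imsetP [i hi ->]]|/imsetP [i hi ->]].
  + by move: hi; rewrite inE bit_Wof.
  + by move: hi; rewrite inE bit_Tof.
- move=> he; case/andP: (hE e he) => ie ce.
  case: (edge_cases ie ce) => [c1|[[i ei]|[_ [i ei]]]].
  + by rewrite he c1.
  + by apply/orP; left; apply/orP; right; apply/imsetP; exists i => //; rewrite inE bit_Wof -ei.
  + by apply/orP; right; apply/imsetP; exists i => //; rewrite inE bit_Tof -ei.
Qed.

Lemma vedge_notin S M i : ~~ (k.+1 < n) -> M \in Aset S -> vedge i \notin M.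
Proof.
move=> hk; rewrite inE => /good_unpack [hE _]; apply/negP => hv.
case/andP: (hE _ hv) => ie ce.
case: (edge_cases ie ce) => [c1|[[i' ei]|[h _]]].
- by rewrite (negbTE (vedge_col i)) in c1.
- by move: (hedge_vedge i' i); rewrite ei eqxx.
- by rewrite h in hk.
Qed.

Lemma fl_in S M : M \in Aset S -> fl M \in Bset S.
Proof.
move=> hA; have eM := gl_fl hA.
have hR : [forall e in (fl M).2, colge k.+1 e] by apply/forall_inP => e; rewrite inE => /andP [].
have cM v := cnt_gl v hR; rewrite eM in cM.
move: (hA); rewrite inE => /good_unpack [hE hV].
rewrite inE /=; apply/andP; split; first (apply/andP; split).
- apply/lokP => i.
  have := hV ((i, j) : V) (leqnn _); rewrite cM (cnt_col hR) //.
  rewrite /= !eqxx /= add0n ?mul1n => h; exact: bool3 h.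
- case: (ltnP k.+1 n) => hk; rewrite ?orbT //.
  apply/orP; left; rewrite /Tof inordK ?mk4_lt // /mk4.
  by rewrite !(negbTE (vedge_notin _ _ hA)) // -ltnNge.
- apply/andP; split.
  + apply/forall_inP => e; rewrite inE => /andP [he ce]; by rewrite ce (andbT) (proj1 (andP (hE e he))).
  + apply/forallP => v; apply/implyP => hv.
    have hv' : k <= v.2 by apply: ltnW.
    have := hV v hv'; rewrite cM /=.
    have -> : (v.2 == j) = false by apply/negbTE; apply/eqP => e; rewrite e ltnn in hv.
    have -> : (v.2 == k :> nat) = false by apply/negbTE; apply/eqP => e; rewrite e ltnn in hv.
    rewrite jn_eq //= mul0n addn0 -/(cnt (rest M) v).
    case: (v.2 == k.+1 :> nat) => /= h; apply/eqP; move: h;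
      case: (bitn (Tof M) v.1); rewrite /= ?mul1n ?mul0n ?addn0; lia.
Qed.

Lemma good_gl S x : x \in Bset S -> gl x \in Aset S.
Proof.
case: x => [[W T] M']; rewrite inE /= => /andP [/andP [hl hb] hg].
move: (hg) => /good_unpack [hE hV].
have hR : [forall e in M', colge k.+1 e] by apply/forall_inP => e /hE /andP [].
rewrite inE; apply/andP; split.
- apply/forall_inP => e; rewrite /gl !inE /= => /orP [/orP [he|/imsetP [i hi ->]]|/imsetP [i hi ->]].
  + by case/andP: (hE e he) => -> /colge_S.
  + rewrite colge2 /= leqnn !andbT /is_edge; apply/existsP; exists ((i, j) : V); apply/existsP; exists ((s4 i, j) : V).
    apply/andP; split; last by apply/eqP.
    by rewrite /CPadj /C4adj /= !eqxx.
  + have hk : k.+1 < n.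
      case/orP: hb => // /eqP e0; by move: hi; rewrite inE e0 bit0.
    rewrite colge2 /= leqnn jn_val //= leqnSn !andbT /is_edge; apply/existsP; exists ((i, j) : V); apply/existsP; exists ((i, jn) : V).
    apply/andP; split; last by apply/eqP.
    by rewrite /CPadj /Padj /= !eqxx /= jn_val // eqxx orbT.
- apply/forallP => v; apply/implyP => hv; apply/eqP.
  rewrite -/(cnt _ v) cnt_gl //=.
  case: (eqVneq v.2 j) => hj.
  + rewrite cnt_col // hj eqxx /= add0n mul1n.
    move/lokP: hl => /(_ v.1).
    by case: (bitn S v.1); case: (bitn W v.1); case: (bitn W (p4o v.1)); case: (bitn T v.1).
  + have hv' : k < v.2 by rewrite ltn_neqAle hv andbT; apply: contra hj => /eqP e; apply/eqP/val_inj.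
    have -> : (v.2 == k :> nat) = false by apply/negbTE; apply/eqP => e; rewrite e ltnn in hv'.
    rewrite mul0n addn0 /= jn_eq //.
    have := hV v hv'.
    case: (v.2 == k.+1 :> nat) => /= ->; last by rewrite mul0n addn0.
    by rewrite mul1n; case: (bitn T v.1).
Qed.

Lemma fl_gl S x : x \in Bset S -> fl (gl x) = x.
Proof.
case: x => [[W T] M']; rewrite inE /= => /andP [/andP [hl hb] hg].
move: (hg) => /good_unpack [hE hV].
have hR : forall e, e \in M' -> colge k.+1 e by move=> e /hE /andP [].
rewrite /fl; congr (_, _, _).
- apply: ord_inj; rewrite /Wof inordK ?mk4_lt // -[RHS]mk4_bit; apply: eq_mk4 => i hi.
  rewrite /gl !inE /=.
  have -> : (hedge (inord i) \in M') = false by apply/negbTE/negP => /hR; rewrite (negbTE (hedge_col _)).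
  have -> : (hedge (inord i) \in Vset T) = false.
    by apply/negbTE/negP => /imsetP [i' _ e]; move: (hedge_vedge (inord i) i'); rewrite e eqxx.
  by rewrite ?orbF /= (mem_imset _ _ hedge_inj) inE /= inordK.
- apply: ord_inj; rewrite /Tof inordK ?mk4_lt // -[RHS]mk4_bit; apply: eq_mk4 => i hi.
  rewrite /gl !inE /=.
  have -> : (vedge (inord i) \in M') = false by apply/negbTE/negP => /hR; rewrite (negbTE (vedge_col _)).
  have -> : (vedge (inord i) \in Hset W) = false.
    by apply/negbTE/negP => /imsetP [i' _ e]; move: (hedge_vedge i' (inord i)); rewrite e eqxx.
  by rewrite ?orbF /= (mem_imset _ _ vedge_inj) inE /= inordK.
- apply/setP => e; rewrite /rest /gl !inE /=.
  apply/idP/idP.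
  + case/andP => /orP [/orP [//|/imsetP [i _ ->]]|/imsetP [i _ ->]].
    * by rewrite (negbTE (hedge_col i)).
    * by rewrite (negbTE (vedge_col i)).
  + by move=> he; rewrite he hR.
Qed.

Lemma F_step S : F k S = \sum_(T < 16) \sum_(W < 16) (lokn S W T && ((T == 0 :> nat) || (k.+1 < n))) * F k.+1 T.
Proof.
rewrite /F -/(Aset S) (@card_bij _ _ (Aset S) (Bset S) fl gl); last first.
- by move=> x hx; apply: fl_gl hx.
- by move=> M hM; apply: gl_fl hM.
- by move=> x hx; apply: good_gl hx.
- by move=> M hM; apply: fl_in hM.
rewrite /Bset card_sumb.
rewrite -(pair_big xpredT xpredT (fun (wt : 'I_16 * 'I_16) M' => (lokn S wt.1 wt.2 && ((wt.2 == 0 :> nat) || (k.+1 < n)) && good k.+1 wt.2 M' : nat))) /=.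
rewrite -(pair_big xpredT xpredT (fun (W T : 'I_16) => \sum_M' (lokn S W T && ((T == 0 :> nat) || (k.+1 < n)) && good k.+1 T M' : nat))) /=.
rewrite exchange_big /=; apply: eq_bigr => T _; apply: eq_bigr => W _.
case: (lokn S W T && _); last by rewrite mul0n big1.
by rewrite mul1n card_sumb.
Qed.

End Col.

Lemma colge0 e : colge 0 e.
Proof. by apply/forall_inP. Qed.

Lemma F_top S : F n S = 1.
Proof.
rewrite /F.
have -> : [set M | good n S M] = [set set0].
  apply/setP => M; rewrite !inE; apply/idP/idP.
  - case/andP => /forall_inP hE _; apply/eqP/setP => e; rewrite inE; apply/negbTE/negP => he.
    case/andP: (hE e he) => /existsP [x /existsP [y /andP [_ /eqP ee]]] /forall_inP /(_ x).
    by rewrite ee !inE eqxx /= leqNgt ltn_ord => /(_ isT).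
  - move/eqP => ->; apply/andP; split; first by apply/forall_inP => e; rewrite inE.
    by apply/forallP => v; rewrite leqNgt ltn_ord.
by rewrite cards1.
Qed.

Lemma G_F : G n = F 0 0.
Proof.
rewrite /G /F; apply: eq_card => M; rewrite !inE /perfect_matching /good.
congr (_ && _).
- apply/forall_inP/forall_inP => h e he; first by rewrite h // colge0.
  by case/andP: (h e he).
- by apply/forallP/forallP => h v; move: (h v); rewrite bit0 andbF.
Qed.

End Comb.

Definition lsum (f : nat -> nat) := foldr (fun t acc => f t + acc) 0 (iota 0 16).
Definition isadj (T : nat) : bool := (T == 3) || (T == 6) || (T == 12) || (T == 9).
Definition coefs (S : nat) : nat * nat * nat :=
  (lsum (fun T => lsum (fun W => lokn S W T * (T == 0))),
   lsum (fun T => lsum (fun W => lokn S W T * isadj T)),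
   lsum (fun T => lsum (fun W => lokn S W T * (T == 15)))).
Definition expc (S : nat) : nat*nat*nat :=
  if S == 0 then (2,4,1) else if isadj S then (1,1,0) else if S == 15 then (1,0,0) else (0,0,0).
Lemma coefs_ok : all (fun S => coefs S == expc S) (iota 0 16).
Proof. vm_compute. reflexivity. Qed.

Lemma eq_lsum g h : (forall x, g x = h x) -> lsum g = lsum h.
Proof. by move=> H; rewrite /lsum; elim: (iota 0 16) => //= x s ->; rewrite H. Qed.
Lemma lsumD g h : lsum (fun x => g x + h x) = lsum g + lsum h.
Proof. rewrite /lsum; elim: (iota 0 16) => //= x s ->; lia. Qed.
Lemma lsumM a g : lsum (fun x => a * g x) = a * lsum g.
Proof. rewrite /lsum; elim: (iota 0 16) => /= [|x s ->]; [by rewrite muln0 | by rewrite mulnDr]. Qed.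
Lemma big16 (f : nat -> nat) : \sum_(T < 16) f T = lsum f.
Proof. rewrite /lsum /= !big_ord_recr big_ord0 /=; lia. Qed.

Fixpoint trip (m : nat) : nat*nat*nat := match m with 0 => (1,0,0) | m'.+1 => let: (a,c,f) := trip m' in (2*a+f+4*c, a+c, a) end.
Definition aa m := (trip m).1.1.
Definition sh (t : nat*nat*nat) (S : nat) := t.1.1 * (S == 0) + t.1.2 * isadj S + t.2 * (S == 15).

Lemma step_sh m S : S < 16 ->
  \sum_(T < 16) \sum_(W < 16) lokn S W T * sh (trip m) T = sh (trip m.+1) S.
Proof.
move=> hS.
transitivity (\sum_(T < 16) lsum (fun W => lokn S W T * sh (trip m) T)).
  by apply: eq_bigr => T _; rewrite (big16 (fun W => lokn S W T * sh (trip m) T)).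
rewrite (big16 (fun T => lsum (fun W => lokn S W T * sh (trip m) T))) /=; case: (trip m) => [[a c] f] /=.
rewrite (eq_lsum (h := fun T => a * lsum (fun W => lokn S W T * (T == 0)) +
   c * lsum (fun W => lokn S W T * isadj T) + f * lsum (fun W => lokn S W T * (T == 15)))); last first.
  move=> T; rewrite -!lsumM -!lsumD; apply: eq_lsum => W; rewrite /sh /=.
  by rewrite !mulnDr !mulnA ![lokn S W T * _]mulnC.
rewrite !lsumD !lsumM.
have := coefs_ok; move/allP/(_ S); rewrite mem_iota /= => /(_ hS) /eqP.
move=> e.
rewrite -[lsum (fun T => lsum (fun W => lokn S W T * (T == 0)))]/((coefs S).1.1).
rewrite -[lsum (fun T => lsum (fun W => lokn S W T * isadj T))]/((coefs S).1.2).
rewrite -[lsum (fun T => lsum (fun W => lokn S W T * (T == 15)))]/((coefs S).2).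
rewrite e {e}.
rewrite /sh /=.
by case: S hS => [|[|[|[|[|[|[|[|[|[|[|[|[|[|[|[|S]]]]]]]]]]]]]]]] hS //=; lia.
Qed.

Definition Fp n k S := F n k S * ((k < n) || (S == 0)).

Lemma Fp_step n k S : k < n -> Fp n k S = \sum_(T < 16) \sum_(W < 16) lokn S W T * Fp n k.+1 T.
Proof.
move=> hk; rewrite /Fp hk /= muln1.
have := @F_step n (Ordinal hk) S; rewrite /= => ->.
apply: eq_bigr => T _; apply: eq_bigr => W _.
rewrite orbC; case: (lokn _ _ _); case: (_ || _); by rewrite ?muln0 ?muln1 ?mul0n ?mul1n.
Qed.

Lemma Fp_sh n m S : m <= n -> S < 16 -> Fp n (n - m) S = sh (trip m) S.
Proof.
elim: m S => [|m IH] S hm hS.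
  by rewrite subn0 /Fp F_top ltnn /sh /=; case: (S == 0); rewrite ?muln0 ?muln1 //= addn0.
rewrite Fp_step; last by lia.
have -> : (n - m.+1).+1 = n - m by lia.
rewrite -step_sh //; apply: eq_bigr => T _; apply: eq_bigr => W _.
by rewrite IH // ltnW.
Qed.

Lemma G_aa n : G n = aa n.
Proof.
rewrite G_F.
have := Fp_sh (leqnn n) (isT : 0 < 16); rewrite subnn /Fp /= orbT muln1 => ->.
by rewrite /sh /aa /= muln1 !muln0 !addn0.
Qed.

Lemma aa_rec m : (aa m.+3 + aa m = 3 * aa m.+2 + 3 * aa m.+1)%N.
Proof. rewrite /aa /=; case: (trip m) => [[a c] f] /=; lia. Qed.

Unset Implicit Arguments.
Import Order.TTheory GRing.Theory Num.Theory.
Local Open Scope ring_scope.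

Section Alg.
Variable R : rcfType.
Let s : R := Num.sqrt 3%:R.
Lemma s2 : s ^+ 2 = 3%:R. Proof. by rewrite /s sqr_sqrtr // ler0n. Qed.
Let al : R := 2%:R + s.
Let be : R := 2%:R - s.
Lemma albe : al * be = 1. Proof. rewrite /al /be. have := s2. move=> h. ring: h. Qed.
Definition Acf (m : nat) : R := (1 / 6%:R) * (al ^+ m.+1 + be ^+ m.+1) + (1 / 3%:R) * (-1) ^+ m.
Lemma Acf_rec m : Acf m.+3 + Acf m = 3%:R * Acf m.+2 + 3%:R * Acf m.+1.
Proof.
rewrite /Acf !exprS.
have ha : al * al = 4%:R * al - 1 by rewrite /al; have := s2; move=> h; ring: h.
have hb : be * be = 4%:R * be - 1 by rewrite /be; have := s2; move=> h; ring: h.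
set x := al ^+ m. set y := be ^+ m. set z := (-1 : R) ^+ m.
ring: ha hb.
Qed.
Lemma Acf_base : [/\ Acf 0 = 1, Acf 1 = 2%:R & Acf 2 = 9%:R].
Proof.
have h := s2.
have q : forall k : nat, Acf k * 6%:R = ((al ^+ k.+1 + be ^+ k.+1) + 2%:R * (-1) ^+ k).
  by move=> k; rewrite /Acf; field.
have n6 : (6%:R : R) != 0 by rewrite pnatr_eq0.
split; apply: (mulIf n6); rewrite q /al /be !exprS !expr0; ring: h.
Qed.
Lemma aa_Acf m : (aa m)%:R = Acf m :> R.
Proof.
suff: [/\ (aa m)%:R = Acf m, (aa m.+1)%:R = Acf m.+1 & (aa m.+2)%:R = Acf m.+2] by case.
have [b0 b1 b2] := Acf_base.
elim: m => [|m [h0 h1 h2]]; first by rewrite b0 b1 b2.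
split => //.
have e := aa_rec m.
have e' : ((aa m.+3)%:R : R) = 3%:R * (aa m.+2)%:R + 3%:R * (aa m.+1)%:R - (aa m)%:R.
  by apply/eqP; rewrite eq_sym subr_eq -!natrM -!natrD e.
by rewrite e' h0 h1 h2 -Acf_rec addrK.
Qed.
Lemma Acl_sq n : ((1 / 6%:R) * ((3%:R + s) * al ^+ n + (3%:R - s) * be ^+ n)) ^+ 2 = Acf (2 * n).
Proof.
have h := s2.
have hxy : al ^+ n * be ^+ n = 1 by rewrite -exprMn albe expr1n.
have hz : (-1 : R) ^+ n * (-1) ^+ n = 1 by rewrite -exprMn mulrNN mulr1 expr1n.
rewrite /Acf mul2n -addnn !exprS !exprD /al /be.
move: hxy hz; rewrite /al /be => hxy hz.
field: h hxy hz; rewrite ?mulf_neq0 ?pnatr_eq0 //.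
Qed.
Lemma Bcl_sq n : (0 < n)%N -> 2%:R * ((1 / (2%:R * s)) * (al ^+ n - be ^+ n)) ^+ 2 = Acf (2 * n - 1).
Proof.
case: n => // n _.
have h := s2.
have hxy : al ^+ n * be ^+ n = 1 by rewrite -exprMn albe expr1n.
have hz : (-1 : R) ^+ n * (-1) ^+ n = 1 by rewrite -exprMn mulrNN mulr1 expr1n.
have -> : (2 * n.+1 - 1 = (n + n).+1)%N by lia.
have sn0 : s != 0 by apply/eqP => e; move: h; rewrite e expr0n /= => /eqP; rewrite eq_sym pnatr_eq0.
rewrite /Acf !exprS !exprD /al /be.
move: hxy hz; rewrite /al /be => hxy hz.
field: h hxy hz; rewrite ?mulf_neq0 ?pnatr_eq0 //.
Qed.
End Alg.

Theorem theorem3 (R : rcfType) :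
  (forall n : nat, (0 < n)%N ->
     (G n)%:R = (1 / 6%:R) * ((2%:R + Num.sqrt 3%:R) ^+ n.+1 + (2%:R - Num.sqrt 3%:R) ^+ n.+1)
                + (1 / 3%:R) * (-1) ^+ n :> R) /\
  (forall n : nat, (0 < n)%N -> (G (2 * n))%:R = (Acl R n) ^+ 2) /\
  (forall n : nat, (0 < n)%N -> (G (2 * n - 1))%:R = 2%:R * (Bcl R n) ^+ 2).
Proof.
split; [|split].
- by move=> n _; rewrite G_aa aa_Acf.
- by move=> n _; rewrite G_aa aa_Acf -Acl_sq.
- by move=> n hn; rewrite G_aa aa_Acf -Bcl_sq.
Qed.
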